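(* Let $L$ be a finite lattice and $\varphi\in M_\infty(L)$. Then for all $n\ge1$ and $a_1,\dots,a_n\in L$, $\Lambda_{a_1,\ldots,a_n}\varphi=\nabla_{a_1,\ldots,a_n}\varphi$.
   Context: $L$ is a finite lattice with meet $\wedge$ and join $\vee$. $\nabla_a\varphi(x)=\varphi(x)-\varphi(x\wedge a)$, $\nabla_{a_1,\ldots,a_n}\varphi=\nabla_{a_n}(\nabla_{a_1,\ldots,a_{n-1}}\varphi)$; $\varphi$ is completely monotone if all $\nabla_{a_1,\dots,a_n}\varphi\ge0$. $M_\infty(L)$ is the set of nonnegative completely monotone functions on $L$ (these are monotone). A path from $a$ to $b$ is a sequence $H=(h_0,\dots,h_m)$ of distinct elements with $h_0=a$, $h_m=b$; $\varphi(H)=\sum_{i=0}^m\varphi(h_i)-\sum_{i=1}^m\varphi(h_{i-1}\vee h_i)$; $\lambda(\varphi;a,b)=\max\{\varphi(H): H\text{ a path from }a\text{ to }b\}$; $\Lambda_a\varphi(x)=\varphi(x)-\lambda(\varphi;a,x)$ and $\Lambda_{a_1,\ldots,a_n}\varphi=\Lambda_{a_n}(\Lambda_{a_1,\ldots,a_{n-1}}\varphi)$. *)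

(* Defs.v *)
From HB Require Import structures.
From mathcomp Require Import all_boot all_order all_algebra.
Set Implicit Arguments. Unset Strict Implicit. Unset Printing Implicit Defensive.
Import Order.TTheory GRing.Theory Num.Theory.
Local Open Scope ring_scope.

Section Defs.
Variables (d : Order.disp_t) (L : finLatticeType d) (R : realFieldType).

Definition nabla (a : L) (phi : L -> R) : L -> R :=
  fun x => phi x - phi (Order.meet x a).

Definition nablas (s : seq L) (phi : L -> R) : L -> R :=
  foldl (fun f a => nabla a f) phi s.

Definition completely_monotone (phi : L -> R) : Prop :=
  forall (s : seq L) (x : L), s != [::] -> 0 <= nablas s phi x.

Definition M_infty (phi : L -> R) : Prop :=
  (forall x, 0 <= phi x) /\ completely_monotone phi.

Definition is_path (a b : L) (H : seq L) : bool :=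
  [&& H != [::], uniq H, head a H == a & last a H == b].

Definition phi_path (phi : L -> R) (H : seq L) : R :=
  \sum_(h <- H) phi h - \sum_(p <- zip H (behead H)) phi (Order.join p.1 p.2).

(* all duplicate-free-candidate sequences of length 1 .. #|L|
   (every path has length at most #|L|) *)
Definition path_cands : seq (seq L) :=
  flatten [seq [seq tval t | t <- enum {: k.-tuple L}] | k <- iota 1 #|L|].

(* a canonical path from a to b, used as initial value of the max *)
Definition trivial_path (a b : L) : seq L :=
  if a == b then [:: a] else [:: a; b].

Definition lambda (phi : L -> R) (a b : L) : R :=
  \big[Num.max/phi_path phi (trivial_path a b)]_(H <- path_cands | is_path a b H)
     phi_path phi H.

Definition Lambda (a : L) (phi : L -> R) : L -> R :=
  fun x => phi x - lambda phi a x.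

Definition Lambdas (s : seq L) (phi : L -> R) : L -> R :=
  foldl (fun f a => Lambda a f) phi s.

End Defs.

(* Main.v *)
Require Import Defs.
From HB Require Import structures.
From mathcomp Require Import lra.
From mathcomp Require Import all_boot all_order all_algebra.
From Stdlib Require Import FunctionalExtensionality.
Import Order.TTheory GRing.Theory Num.Theory.
Local Open Scope ring_scope.

Section Proofs.
Variables (d : Order.disp_t) (L : finLatticeType d) (R : realFieldType).
Implicit Types (phi : L -> R) (a x y z : L).

Lemma mono_of phi : (forall a x, 0 <= phi x - phi (Order.meet x a)) ->
  forall u v : L, (u <= v)%O -> phi u <= phi v.
Proof.
move=> H u v uv; have := H u v; rewrite (meet_r uv) subr_ge0 //.
Qed.

Lemma key phi : M_infty phi -> forall a y z,
  phi (Order.meet a y) - phi (Order.meet a z) <=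
  phi (Order.join y z) - phi z.
Proof.
move=> [_ cm] a y z.
have m1 : forall u v : L, (u <= v)%O -> phi u <= phi v.
  apply: mono_of => b x; exact: (cm [:: b] x).
have m2 : forall u v : L, (u <= v)%O -> nabla z phi u <= nabla z phi v.
  apply: mono_of => b x; exact: (cm [:: z; b] x).
have h1 : phi (Order.meet (Order.meet a y) z) <= phi (Order.meet a z).
  by apply: m1; rewrite -meetA leI2 // leIr.
apply: le_trans (_ : nabla z phi (Order.meet a y) <= _).
  by rewrite /nabla lerD2l lerN2.
apply: le_trans (_ : nabla z phi y <= _); first by apply: m2; rewrite leIr.
have := m2 _ _ (leUl y z); rewrite /nabla.
by rewrite (@meet_r _ _ (Order.join y z) z) // ?leUr ?leUl.
Qed.

Lemma phi_path1 phi h : phi_path phi [:: h] = phi h.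
Proof. by rewrite /phi_path /= big_seq1 big_nil subr0. Qed.

Lemma phi_path_cons phi h h1 t : phi_path phi [:: h, h1 & t] =
  phi h - phi (Order.join h h1) + phi_path phi (h1 :: t).
Proof.
rewrite /phi_path /= !big_cons /=.
set A := \sum_(j <- _) _; set B := \sum_(j <- _) _.
rewrite /A /B; lra.
Qed.

Lemma path_bound phi : M_infty phi -> forall t h,
  phi_path phi (h :: t) <= phi (Order.meet h (last h t)).
Proof.
move=> Mphi; elim=> [|h1 t IH] h /=; first by rewrite phi_path1 meetxx.
rewrite phi_path_cons.
have K := @key phi Mphi (last h1 t) h1 h.
have I := IH h1.
rewrite (meetC (last h1 t) h1) (meetC (last h1 t) h) (joinC h1 h) in K.
lra.
Qed.

Lemma bigmax_ub (I : Type) (r : seq I) (P : pred I) (F : I -> R) (i0 c : R) :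
  i0 <= c -> (forall i, P i -> F i <= c) ->
  \big[Num.max/i0]_(i <- r | P i) F i <= c.
Proof.
move=> h0 hF; apply: (big_ind (fun v => v <= c)) => //.
by move=> u v hu hv; rewrite ge_max hu hv.
Qed.

Lemma bigmax_lb (I : eqType) (r : seq I) (P : pred I) (F : I -> R) (i0 c : R) :
  (i0 >= c \/ exists2 i, i \in r & P i && (F i >= c)) ->
  \big[Num.max/i0]_(i <- r | P i) F i >= c.
Proof.
elim: r => [|j r IH] /=.
  by rewrite big_nil => -[//|[i]]; rewrite in_nil.
move=> H; rewrite big_cons; case: ifP => Pj.
  rewrite le_max; apply/orP.
  case: H => [H|[i]]; first by right; apply: IH; left.
  rewrite in_cons => /orP[/eqP ->|ir] /andP[Pi Fi]; first by left.
  by right; apply: IH; right; exists i => //; rewrite Pi Fi.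
apply: IH; case: H => [H|[i]]; first by left.
rewrite in_cons => /orP[/eqP ->|ir] /andP[Pi Fi]; first by rewrite Pi in Pj.
by right; exists i => //; rewrite Pi Fi.
Qed.

Lemma lambda_eq phi : M_infty phi -> forall a x,
  lambda phi a x = phi (Order.meet a x).
Proof.
move=> Mphi a x; apply/eqP; rewrite eq_le; apply/andP; split.
  apply: bigmax_ub.
    rewrite /trivial_path; case: eqP => [<-|_].
      exact: (@path_bound phi Mphi [::] a).
    exact: (@path_bound phi Mphi [:: x] a).
  move=> H /and4P[H0 _ /eqP hH /eqP lH].
  case: H H0 hH lH => [//|h t] _ /= -> <-.
  exact: (@path_bound phi Mphi).
apply: bigmax_lb.
case: (boolP ((a <= x)%O || (x <= a)%O)) => cmp.
  left; rewrite /trivial_path; case: eqP => [<-|_].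
    by rewrite phi_path1 meetxx.
  rewrite phi_path_cons phi_path1.
  case/orP: cmp => c.
    by rewrite (join_r c) (meet_l c) addrNK.
  by rewrite (join_l c) (meet_r c) subrr add0r.
right; exists [:: a; Order.meet a x; x].
  have U : uniq [:: a; Order.meet a x; x].
    rewrite /= !in_cons !in_nil !orbF andbT.
    rewrite eq_sym eq_meetl eq_meetr.
    have ax : a != x by apply: contraNneq cmp => ->; rewrite lexx.
    move: cmp; rewrite negb_or => /andP[c1 c2].
    by rewrite ?(negbTE c1) ?(negbTE c2) ?(negbTE ax).
  apply/flattenP; exists [seq tval t | t <- enum {: 3.-tuple L}].
    apply/mapP; exists 3%N => //; rewrite mem_iota /= add1n ltnS.
    rewrite cardE; apply: uniq_leq_size U _ => y _; exact: mem_enum.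
  by apply/mapP; exists [tuple a; Order.meet a x; x]; rewrite ?mem_enum.
apply/andP; split.
  apply/and4P; split => //.
  rewrite /= !in_cons !in_nil !orbF andbT.
  rewrite eq_sym eq_meetl eq_meetr.
  have ax : a != x by apply: contraNneq cmp => ->; rewrite lexx.
  move: cmp; rewrite negb_or => /andP[c1 c2].
  by rewrite ?(negbTE c1) ?(negbTE c2) ?(negbTE ax).
rewrite !phi_path_cons phi_path1.
rewrite (join_l (leIl a x)) meetC (join_r (leIl x a)).
lra.
Qed.

Lemma Lambda_nabla phi a : M_infty phi -> Lambda a phi = nabla a phi.
Proof.
move=> Mphi; apply: functional_extensionality => x.
by rewrite /Lambda /nabla (@lambda_eq phi Mphi) meetC.
Qed.

Lemma nabla_M phi a : M_infty phi -> M_infty (nabla a phi).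
Proof.
move=> [p0 cm]; split.
  move=> x; exact: (cm [:: a] x).
move=> s x _; exact: (cm (a :: s) x).
Qed.

Lemma Lambdas_nablas s : forall phi, M_infty phi -> forall x,
  Lambdas s phi x = nablas s phi x.
Proof.
elim: s => [//|a s IH] phi Mphi x /=.
rewrite /Lambdas /nablas /= (@Lambda_nabla phi a Mphi).
exact: (IH _ (@nabla_M phi a Mphi)).
Qed.

End Proofs.

Theorem lemma3p16 (d : Order.disp_t) (L : finLatticeType d) (R : realFieldType)
  (phi : L -> R) :
  M_infty phi ->
  forall (s : seq L), (1 <= size s)%N ->
  forall x : L, Lambdas s phi x = nablas s phi x.
Proof. by move=> Mphi s _ x; apply: Lambdas_nablas. Qed.
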